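(* Let $P$ be a propositional variable and $T$ a closed term with $\vdash T:\perp\to P$. Then for every term $t$ and every $\bar u\in\mathcal{E}^{<\omega}$, $((T\ t)\ \bar u)\triangleright^*\underline{\mu}.t$, i.e. $((T\ t)\ \bar u)$ reduces to some element of $M_t$.
   Context: Formulas are built from propositional variables and $\perp$ using $\to,\wedge,\vee$. Terms $\mathcal{T}$ and $\mathcal{E}$-terms: with disjoint sets $\mathcal{X}$ ($\lambda$-variables) and $\mathcal{A}$ ($\mu$-variables), $\mathcal{T} ::= x \mid \lambda x.\mathcal{T} \mid (\mathcal{T}\ \mathcal{E}) \mid \langle \mathcal{T},\mathcal{T}\rangle \mid \omega_1\mathcal{T} \mid \omega_2\mathcal{T} \mid \mu a.\mathcal{T} \mid (a\ \mathcal{T})$ and $\mathcal{E} ::= \mathcal{T} \mid \pi_1 \mid \pi_2 \mid [x.\mathcal{T}, y.\mathcal{T}]$. Typing judgements $\Gamma\vdash t:A;\Delta$ are generated by: $\Gamma,x:A\vdash x:A;\Delta$; from $\Gamma,x:A\vdash t:B;\Delta$ infer $\Gamma\vdash\lambda x.t:A\to B;\Delta$; from $\Gamma\vdash u:A\to B;\Delta$ and $\Gamma\vdash v:A;\Delta$ infer $\Gamma\vdash(u\ v):B;\Delta$; from $\Gamma\vdash u:A;\Delta$, $\Gamma\vdash v:B;\Delta$ infer $\Gamma\vdash\langle u,v\rangle:A\wedge B;\Delta$; from $\Gamma\vdash t:A\wedge B;\Delta$ infer $\Gamma\vdash(t\ \pi_1):A;\Delta$ and $\Gamma\vdash(t\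 \pi_2):B;\Delta$; from $\Gamma\vdash t:A;\Delta$ infer $\Gamma\vdash\omega_1t:A\vee B;\Delta$; from $\Gamma\vdash t:B;\Delta$ infer $\Gamma\vdash\omega_2t:A\vee B;\Delta$; from $\Gamma\vdash t:A\vee B;\Delta$, $\Gamma,x:A\vdash u:C;\Delta$, $\Gamma,y:B\vdash v:C;\Delta$ infer $\Gamma\vdash(t\ [x.u,y.v]):C;\Delta$; from $\Gamma\vdash t:A;\Delta,a:A$ infer $\Gamma\vdash(a\ t):\perp;\Delta,a:A$; from $\Gamma\vdash t:\perp;\Delta,a:A$ infer $\Gamma\vdash\mu a.t:A;\Delta$. A closed term of type $A$ is one with $\vdash T:A$ (empty contexts). Reduction $\triangleright$ is the compatible closure of: $(\lambda x.u\ v)\triangleright u[x:=v]$; $(\langle t_1,t_2\rangle\ \pi_i)\triangleright t_i$; $(\omega_i t\ [x_1.u_1,x_2.u_2])\triangleright u_i[x_i:=t]$; $((t\ [x_1.u_1,x_2.u_2])\ \varepsilon)\triangleright(t\ [x_1.(u_1\ \varepsilon),x_2.(u_2\ \varepsilon)])$; $(\mu a.t\ \varepsilon)\triangleright\mu a.t[a:=^*\varepsilon]$ ($t[a:=^*\varepsilon]$ replaces inductively each subterm $(a\ v)$ by $(a\ (v\ \varepsilon))$); $\triangleright^*$ is its reflexive-transitive closure. $\mathcal{E}^{<\omega}$ is the set of finite sequences of $\mathcal{E}$-terms; for $\bar w=w_1\dots w_n$, $(t\ \bar w)$ is $t$ if $n=0$ and $((t\ w_1)\ w_2\dots w_n)$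 otherwise. For a term $t$, $M_t$ is the smallest set containing $t$ such that if $u\in M_t$ and $a\in\mathcal{A}$ then $\mu a.u\in M_t$ and $(a\ u)\in M_t$; $\underline{\mu}.t$ denotes an (unspecified) element of $M_t$, and ''$s\triangleright^*\underline{\mu}.t$'' means $s\triangleright^* w$ for some $w\in M_t$. *)

(* Defs.v *)
(* Lambda-mu calculus with conjunction and disjunction,
   presented with de Bruijn indices (two independent index spaces:
   lambda-variables and mu-variables). *)
From Stdlib Require Import Arith List Relations.
Import ListNotations.

Inductive form : Type :=
| PVar (p : nat)
| Bot
| Imp (A B : form)
| And (A B : form)
| Or  (A B : form).

(* Terms T and E-terms. Binders:
   Lam t binds lambda-index 0 in t;
   Case u v binds lambda-index 0 in u and in v ([x.u, y.v]);
   Mu t binds mu-index 0 in t;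
   Ctrl a t is (a t) with a a mu-index. *)
Inductive term : Type :=
| Var (n : nat)
| Lam (t : term)
| App (t : term) (e : eterm)
| Pair (t1 t2 : term)
| Inj1 (t : term)
| Inj2 (t : term)
| Mu (t : term)
| Ctrl (a : nat) (t : term)
with eterm : Type :=
| ETm (t : term)
| Proj1
| Proj2
| Case (u v : term).

Fixpoint lshift (c : nat) (t : term) : term :=
  match t with
  | Var n => if n <? c then Var n else Var (S n)
  | Lam u => Lam (lshift (S c) u)
  | App u e => App (lshift c u) (lshift_e c e)
  | Pair u v => Pair (lshift c u) (lshift c v)
  | Inj1 u => Inj1 (lshift c u)
  | Inj2 u => Inj2 (lshift c u)
  | Mu u => Mu (lshift c u)
  | Ctrl a u => Ctrl a (lshift c u)
  end
with lshift_e (c : nat) (e : eterm) : eterm :=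
  match e with
  | ETm u => ETm (lshift c u)
  | Proj1 => Proj1
  | Proj2 => Proj2
  | Case u v => Case (lshift (S c) u) (lshift (S c) v)
  end.

Fixpoint mshift (c : nat) (t : term) : term :=
  match t with
  | Var n => Var n
  | Lam u => Lam (mshift c u)
  | App u e => App (mshift c u) (mshift_e c e)
  | Pair u v => Pair (mshift c u) (mshift c v)
  | Inj1 u => Inj1 (mshift c u)
  | Inj2 u => Inj2 (mshift c u)
  | Mu u => Mu (mshift (S c) u)
  | Ctrl a u => Ctrl (if a <? c then a else S a) (mshift c u)
  end
with mshift_e (c : nat) (e : eterm) : eterm :=
  match e with
  | ETm u => ETm (mshift c u)
  | Proj1 => Proj1
  | Proj2 => Proj2
  | Case u v => Case (mshift c u) (mshift c v)
  end.

Fixpoint lsubst (k : nat) (v : term) (t : term) : term :=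
  match t with
  | Var n => if n =? k then v else if n <? k then Var n else Var (pred n)
  | Lam u => Lam (lsubst (S k) (lshift 0 v) u)
  | App u e => App (lsubst k v u) (lsubst_e k v e)
  | Pair u w => Pair (lsubst k v u) (lsubst k v w)
  | Inj1 u => Inj1 (lsubst k v u)
  | Inj2 u => Inj2 (lsubst k v u)
  | Mu u => Mu (lsubst k (mshift 0 v) u)
  | Ctrl a u => Ctrl a (lsubst k v u)
  end
with lsubst_e (k : nat) (v : term) (e : eterm) : eterm :=
  match e with
  | ETm u => ETm (lsubst k v u)
  | Proj1 => Proj1
  | Proj2 => Proj2
  | Case u w => Case (lsubst (S k) (lshift 0 v) u) (lsubst (S k) (lshift 0 v) w)
  end.

Fixpoint ssub (k : nat) (eps : eterm) (t : term) : term :=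
  match t with
  | Var n => Var n
  | Lam u => Lam (ssub k (lshift_e 0 eps) u)
  | App u e => App (ssub k eps u) (ssub_e k eps e)
  | Pair u w => Pair (ssub k eps u) (ssub k eps w)
  | Inj1 u => Inj1 (ssub k eps u)
  | Inj2 u => Inj2 (ssub k eps u)
  | Mu u => Mu (ssub (S k) (mshift_e 0 eps) u)
  | Ctrl a u =>
      if a =? k then Ctrl a (App (ssub k eps u) eps) else Ctrl a (ssub k eps u)
  end
with ssub_e (k : nat) (eps : eterm) (e : eterm) : eterm :=
  match e with
  | ETm u => ETm (ssub k eps u)
  | Proj1 => Proj1
  | Proj2 => Proj2
  | Case u w => Case (ssub k (lshift_e 0 eps) u) (ssub k (lshift_e 0 eps) w)
  end.

(* Typing  G |- t : A ; D  (G: lambda context, D: mu context, index 0 first) *)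
Inductive ty : list form -> list form -> term -> form -> Prop :=
| ty_var G D n A : nth_error G n = Some A -> ty G D (Var n) A
| ty_lam G D A B t : ty (A :: G) D t B -> ty G D (Lam t) (Imp A B)
| ty_app G D A B u v : ty G D u (Imp A B) -> ty G D v A -> ty G D (App u (ETm v)) B
| ty_pair G D A B u v : ty G D u A -> ty G D v B -> ty G D (Pair u v) (And A B)
| ty_proj1 G D A B t : ty G D t (And A B) -> ty G D (App t Proj1) A
| ty_proj2 G D A B t : ty G D t (And A B) -> ty G D (App t Proj2) B
| ty_inj1 G D A B t : ty G D t A -> ty G D (Inj1 t) (Or A B)
| ty_inj2 G D A B t : ty G D t B -> ty G D (Inj2 t) (Or A B)
| ty_case G D A B C t u v :
    ty G D t (Or A B) -> ty (A :: G) D u C -> ty (B :: G) D v C ->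
    ty G D (App t (Case u v)) C
| ty_ctrl G D a A t : nth_error D a = Some A -> ty G D t A -> ty G D (Ctrl a t) Bot
| ty_mu G D A t : ty G (A :: D) t Bot -> ty G D (Mu t) A.

Inductive step : term -> term -> Prop :=
| st_beta u v : step (App (Lam u) (ETm v)) (lsubst 0 v u)
| st_proj1 t1 t2 : step (App (Pair t1 t2) Proj1) t1
| st_proj2 t1 t2 : step (App (Pair t1 t2) Proj2) t2
| st_case1 t u1 u2 : step (App (Inj1 t) (Case u1 u2)) (lsubst 0 t u1)
| st_case2 t u1 u2 : step (App (Inj2 t) (Case u1 u2)) (lsubst 0 t u2)
| st_perm t u1 u2 e :
    step (App (App t (Case u1 u2)) e)
         (App t (Case (App u1 (lshift_e 0 e)) (App u2 (lshift_e 0 e))))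
| st_mu t e : step (App (Mu t) e) (Mu (ssub 0 (mshift_e 0 e) t))
| st_lam t t' : step t t' -> step (Lam t) (Lam t')
| st_appl t t' e : step t t' -> step (App t e) (App t' e)
| st_appr t e e' : estep e e' -> step (App t e) (App t e')
| st_pairl t t' u : step t t' -> step (Pair t u) (Pair t' u)
| st_pairr t u u' : step u u' -> step (Pair t u) (Pair t u')
| st_inj1 t t' : step t t' -> step (Inj1 t) (Inj1 t')
| st_inj2 t t' : step t t' -> step (Inj2 t) (Inj2 t')
| st_mu_c t t' : step t t' -> step (Mu t) (Mu t')
| st_ctrl a t t' : step t t' -> step (Ctrl a t) (Ctrl a t')
with estep : eterm -> eterm -> Prop :=
| es_tm t t' : step t t' -> estep (ETm t) (ETm t')
| es_casel u u' v : step u u' -> estep (Case u v) (Case u' v)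
| es_caser u v v' : step v v' -> estep (Case u v) (Case u v').

Definition red : term -> term -> Prop := clos_refl_trans term step.

Definition apps (t : term) (ws : list eterm) : term := fold_left App ws t.

(* Binders a are taken fresh for t (capture-avoiding,
   Barendregt convention), so under a Mu the free mu-indices of t are shifted. *)
Inductive inM : term -> term -> Prop :=
| inM_base t : inM t t
| inM_mu t u : inM (mshift 0 t) u -> inM t (Mu u)
| inM_ctrl t a u : inM t u -> inM t (Ctrl a u).

(* Main.v *)
Require Import Defs.
From Stdlib Require Import List Arith Lia Relations.
Import ListNotations.

Scheme term_ind2 := Induction for term Sort Prop
with eterm_ind2 := Induction for eterm Sort Prop.
Combined Scheme te_ind from term_ind2, eterm_ind2.

Ltac dnat := repeat (simpl; match goal with
  | |- context[?a =? ?b] => destruct (Nat.eqb_spec a b)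
  | |- context[?a <? ?b] => destruct (Nat.ltb_spec a b)
  | |- context[match ?k with 0 => _ | S _ => _ end] => destruct k
  end); simpl.

Ltac fin := try reflexivity; try (f_equal; lia); try (exfalso; lia); try (f_equal; f_equal; lia).

Lemma B1 : (forall x c d, c <= d -> lshift (S d) (lshift c x) = lshift c (lshift d x))
  /\ (forall e c d, c <= d -> lshift_e (S d) (lshift_e c e) = lshift_e c (lshift_e d e)).
Proof.
  apply te_ind; intros; simpl; try (f_equal; auto with arith; fail).
  - dnat; fin.
Qed.

Lemma B2 : (forall x c d, c <= d -> mshift (S d) (mshift c x) = mshift c (mshift d x))
  /\ (forall e c d, c <= d -> mshift_e (S d) (mshift_e c e) = mshift_e c (mshift_e d e)).
Proof.
  apply te_ind; intros; simpl; try (f_equal; auto with arith; fail).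
  - f_equal; [dnat; fin | auto].
Qed.

Lemma B3 : (forall x c d, lshift d (mshift c x) = mshift c (lshift d x))
  /\ (forall e c d, lshift_e d (mshift_e c e) = mshift_e c (lshift_e d e)).
Proof.
  apply te_ind; intros; simpl; try (f_equal; auto with arith; fail).
  - dnat; fin.
Qed.

Lemma B4 : (forall x k v, lsubst k v (lshift k x) = x)
  /\ (forall e k v, lsubst_e k v (lshift_e k e) = e).
Proof.
  apply te_ind; intros; simpl; try (f_equal; auto with arith; fail).
  - dnat; fin.
Qed.

Lemma B5 : (forall x k d v, d <= k -> lsubst (S k) (lshift d v) (lshift d x) = lshift d (lsubst k v x))
  /\ (forall e k d v, d <= k -> lsubst_e (S k) (lshift d v) (lshift_e d e) = lshift_e d (lsubst_e k v e)).
Proof.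
  apply te_ind; intros; simpl; try (f_equal; auto with arith; fail).
  - dnat; fin.
  - f_equal. rewrite <- (proj1 B1) by lia. apply H; lia.
  - f_equal. rewrite <- (proj1 B3). auto.
  - f_equal; rewrite <- (proj1 B1) by lia; [apply H|apply H0]; lia.
Qed.

Lemma B6 : (forall x k c v, lsubst k (mshift c v) (mshift c x) = mshift c (lsubst k v x))
  /\ (forall e k c v, lsubst_e k (mshift c v) (mshift_e c e) = mshift_e c (lsubst_e k v e)).
Proof.
  apply te_ind; intros; simpl; try (f_equal; auto with arith; fail).
  - dnat; fin.
  - f_equal. rewrite (proj1 B3). auto.
  - f_equal. rewrite <- (proj1 B2) by lia. auto.
  - f_equal; rewrite (proj1 B3); auto.
Qed.

Lemma B7 : (forall x k eps, ssub k eps (mshift k x) = mshift k x)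
  /\ (forall e k eps, ssub_e k eps (mshift_e k e) = mshift_e k e).
Proof.
  apply te_ind; intros; simpl; try (f_equal; auto with arith; fail).
  - dnat; fin; f_equal; auto.
Qed.

Lemma B8 : (forall x k d eps, lshift d (ssub k eps x) = ssub k (lshift_e d eps) (lshift d x))
  /\ (forall e k d eps, lshift_e d (ssub_e k eps e) = ssub_e k (lshift_e d eps) (lshift_e d e)).
Proof.
  apply te_ind; intros; simpl; try (f_equal; auto with arith; fail).
  - dnat; fin.
  - f_equal. rewrite H. f_equal. rewrite (proj2 B1) by lia. auto.
  - f_equal. rewrite H. f_equal. rewrite (proj2 B3). auto.
  - dnat; f_equal; simpl; f_equal; auto.
  - f_equal; [rewrite H|rewrite H0]; f_equal; rewrite (proj2 B1) by lia; auto.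
Qed.

Definition bump c k := if k <? c then k else S k.

Lemma bump_eqb c a k : (bump c a =? bump c k) = (a =? k).
Proof. apply Bool.eq_true_iff_eq; rewrite !Nat.eqb_eq; unfold bump;
  destruct (Nat.ltb_spec a c), (Nat.ltb_spec k c); lia. Qed.

Lemma B9 : (forall x k c eps, mshift c (ssub k eps x) = ssub (bump c k) (mshift_e c eps) (mshift c x))
  /\ (forall e k c eps, mshift_e c (ssub_e k eps e) = ssub_e (bump c k) (mshift_e c eps) (mshift_e c e)).
Proof.
  apply te_ind; intros; simpl; try (f_equal; auto with arith; fail).
  - f_equal. rewrite H. f_equal. rewrite (proj2 B3). auto.
  - f_equal. rewrite H. f_equal.
    + unfold bump; dnat; fin.
    + rewrite (proj2 B2) by lia. auto.
  - fold (bump c a). rewrite bump_eqb. destruct (a =? k); simpl; f_equal; f_equal; auto.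
  - f_equal; [rewrite H|rewrite H0]; f_equal; rewrite (proj2 B3); auto.
Qed.

Definition upL (s : nat -> term) n := match n with 0 => Var 0 | S n => lshift 0 (s n) end.
Definition upX (x : nat -> nat) a := match a with 0 => 0 | S a => S (x a) end.
Definition upM (r : nat -> list eterm) a :=
  match a with 0 => nil | S a => map (mshift_e 0) (r a) end.
Definition lshR (r : nat -> list eterm) a := map (lshift_e 0) (r a).

Fixpoint sub (xi : nat -> nat) (s : nat -> term) (r : nat -> list eterm) (t : term) : term :=
  match t with
  | Var n => s n
  | Lam u => Lam (sub xi (upL s) (lshR r) u)
  | App u e => App (sub xi s r u) (sub_e xi s r e)
  | Pair u v => Pair (sub xi s r u) (sub xi s r v)
  | Inj1 u => Inj1 (sub xi s r u)
  | Inj2 u => Inj2 (sub xi s r u)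
  | Mu u => Mu (sub (upX xi) (fun n => mshift 0 (s n)) (upM r) u)
  | Ctrl a u => Ctrl (xi a) (apps (sub xi s r u) (r a))
  end
with sub_e xi s r e :=
  match e with
  | ETm u => ETm (sub xi s r u)
  | Proj1 => Proj1
  | Proj2 => Proj2
  | Case u v => Case (sub xi (upL s) (lshR r) u) (sub xi (upL s) (lshR r) v)
  end.

Lemma sub_ext : (forall t xi s r xi' s' r', (forall a, xi a = xi' a) -> (forall n, s n = s' n) ->
    (forall a, r a = r' a) -> sub xi s r t = sub xi' s' r' t)
 /\ (forall e xi s r xi' s' r', (forall a, xi a = xi' a) -> (forall n, s n = s' n) ->
    (forall a, r a = r' a) -> sub_e xi s r e = sub_e xi' s' r' e).
Proof.
  apply te_ind; intros; simpl; try (f_equal; eauto; fail).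
  - f_equal; apply H; auto; intros [|n]; simpl; unfold lshR; try rewrite H1; try rewrite H2; auto.
  - f_equal; apply H; auto; intros [|n]; simpl; try rewrite H0; try rewrite H1; try rewrite H2; auto.
  - rewrite H0, H2; f_equal; f_equal; eauto.
  - f_equal; [apply H|apply H0]; auto; intros [|n]; simpl; unfold lshR; try rewrite H2; try rewrite H3; auto.
Qed.

Lemma sub_id : (forall t xi s r, (forall a, xi a = a) -> (forall n, s n = Var n) ->
    (forall a, r a = nil) -> sub xi s r t = t)
 /\ (forall e xi s r, (forall a, xi a = a) -> (forall n, s n = Var n) ->
    (forall a, r a = nil) -> sub_e xi s r e = e).
Proof.
  apply te_ind; intros; simpl; try (f_equal; eauto; fail).
  - f_equal; apply H; auto; intros [|n]; simpl; unfold lshR; try rewrite H1; try rewrite H2; auto.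
  - f_equal; apply H; auto; intros [|n]; simpl; try rewrite H1; try rewrite H2; auto.
  - rewrite H0, H2; simpl; f_equal; eauto.
  - f_equal; [apply H|apply H0]; auto; intros [|n]; simpl; unfold lshR; try rewrite H2; try rewrite H3; auto.
Qed.

Lemma apps_app x p q : apps x (p ++ q) = apps (apps x p) q.
Proof. unfold apps. apply fold_left_app. Qed.

Lemma apps_lshift d p : forall x, lshift d (apps x p) = apps (lshift d x) (map (lshift_e d) p).
Proof. induction p; simpl; auto. Qed.
Lemma apps_mshift d p : forall x, mshift d (apps x p) = apps (mshift d x) (map (mshift_e d) p).
Proof. induction p; simpl; auto. Qed.
Lemma apps_lsubst k v p : forall x, lsubst k v (apps x p) = apps (lsubst k v x) (map (lsubst_e k v) p).
Proof. induction p; simpl; auto. Qed.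
Lemma apps_ssub k v p : forall x, ssub k v (apps x p) = apps (ssub k v x) (map (ssub_e k v) p).
Proof. induction p; simpl; auto. Qed.

Lemma msh_sub : (forall t c xi s r, mshift c (sub xi s r t) =
    sub (fun a => bump c (xi a)) (fun n => mshift c (s n)) (fun a => map (mshift_e c) (r a)) t)
 /\ (forall e c xi s r, mshift_e c (sub_e xi s r e) =
    sub_e (fun a => bump c (xi a)) (fun n => mshift c (s n)) (fun a => map (mshift_e c) (r a)) e).
Proof.
  apply te_ind; intros; simpl; try (f_equal; eauto; fail).
  - f_equal; rewrite H; apply (proj1 sub_ext); auto.
    + intros [|n]; simpl; auto. symmetry; apply (proj1 B3).
    + intros a; unfold lshR; rewrite !map_map; apply map_ext; intros; symmetry; apply (proj2 B3).
  - f_equal; rewrite H; apply (proj1 sub_ext).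
    + intros [|a]; unfold bump; simpl; dnat; fin.
    + intros n; apply (proj1 B2); lia.
    + intros [|a]; simpl; auto. rewrite !map_map; apply map_ext; intros; apply (proj2 B2); lia.
  - rewrite apps_mshift, H. reflexivity.
  - f_equal; [rewrite H|rewrite H0]; apply (proj1 sub_ext); auto.
    + intros [|n]; simpl; auto. symmetry; apply (proj1 B3).
    + intros a; unfold lshR; rewrite !map_map; apply map_ext; intros; symmetry; apply (proj2 B3).
    + intros [|n]; simpl; auto. symmetry; apply (proj1 B3).
    + intros a; unfold lshR; rewrite !map_map; apply map_ext; intros; symmetry; apply (proj2 B3).
Qed.

Lemma lsub_sub : (forall t k v xi s r, lsubst k v (sub xi s r t) =
    sub xi (fun n => lsubst k v (s n)) (fun a => map (lsubst_e k v) (r a)) t)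
 /\ (forall e k v xi s r, lsubst_e k v (sub_e xi s r e) =
    sub_e xi (fun n => lsubst k v (s n)) (fun a => map (lsubst_e k v) (r a)) e).
Proof.
  apply te_ind; intros; simpl; try (f_equal; eauto; fail).
  - f_equal; rewrite H; apply (proj1 sub_ext); auto.
    + intros [|n]; simpl; auto. apply (proj1 B5); lia.
    + intros a; unfold lshR; rewrite !map_map; apply map_ext; intros; apply (proj2 B5); lia.
  - f_equal; rewrite H; apply (proj1 sub_ext); auto.
    + intros n; apply (proj1 B6).
    + intros [|a]; simpl; auto. rewrite !map_map; apply map_ext; intros; apply (proj2 B6).
  - rewrite apps_lsubst, H. reflexivity.
  - f_equal; [rewrite H|rewrite H0]; apply (proj1 sub_ext); auto.
    + intros [|n]; simpl; auto. apply (proj1 B5); lia.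
    + intros a; unfold lshR; rewrite !map_map; apply map_ext; intros; apply (proj2 B5); lia.
    + intros [|n]; simpl; auto. apply (proj1 B5); lia.
    + intros a; unfold lshR; rewrite !map_map; apply map_ext; intros; apply (proj2 B5); lia.
Qed.

Lemma ssub_sub : (forall t k eps xi s r, ssub k eps (sub xi s r t) =
    sub xi (fun n => ssub k eps (s n))
      (fun a => map (ssub_e k eps) (r a) ++ (if xi a =? k then eps :: nil else nil)) t)
 /\ (forall e k eps xi s r, ssub_e k eps (sub_e xi s r e) =
    sub_e xi (fun n => ssub k eps (s n))
      (fun a => map (ssub_e k eps) (r a) ++ (if xi a =? k then eps :: nil else nil)) e).
Proof.
  apply te_ind; intros; simpl; try (f_equal; eauto; fail).
  - f_equal; rewrite H; apply (proj1 sub_ext); auto.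
    + intros [|n]; simpl; auto. symmetry; apply (proj1 B8).
    + intros a; unfold lshR; rewrite map_app, !map_map. f_equal.
      * apply map_ext; intros; symmetry; apply (proj2 B8).
      * destruct (xi a =? k); auto.
  - f_equal; rewrite H; apply (proj1 sub_ext); auto.
    + intros n. rewrite (proj1 B9 (s n) k 0). reflexivity.
    + intros [|a]; simpl; auto. rewrite map_app, !map_map. f_equal.
      * apply map_ext; intros; rewrite (proj2 B9 a0 k 0). reflexivity.
      * destruct (xi a =? k); auto.
  - rewrite apps_ssub, H. destruct (xi a =? k); simpl.
    + rewrite apps_app. reflexivity.
    + rewrite app_nil_r. reflexivity.
  - f_equal; [rewrite H|rewrite H0]; apply (proj1 sub_ext); auto.
    + intros [|n]; simpl; auto. symmetry; apply (proj1 B8).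
    + intros a; unfold lshR; rewrite map_app, !map_map. f_equal.
      * apply map_ext; intros; symmetry; apply (proj2 B8).
      * destruct (xi a =? k); auto.
    + intros [|n]; simpl; auto. symmetry; apply (proj1 B8).
    + intros a; unfold lshR; rewrite map_app, !map_map. f_equal.
      * apply map_ext; intros; symmetry; apply (proj2 B8).
      * destruct (xi a =? k); auto.
Qed.

Lemma red_step x y : step x y -> red x y.
Proof. intros; apply rt_step; auto. Qed.
Lemma red_trans x y z : red x y -> red y z -> red x z.
Proof. intros; eapply rt_trans; eauto. Qed.
Lemma red_refl x : red x x.
Proof. apply rt_refl. Qed.

Lemma red_ctx (f : term -> term) : (forall x y, step x y -> step (f x) (f y)) ->
  forall x y, red x y -> red (f x) (f y).
Proof. intros Hf x y H; induction H; [apply red_step; auto|apply red_refl|eapply red_trans; eauto]. Qed.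

Lemma step_apps p : forall x y, step x y -> step (apps x p) (apps y p).
Proof. induction p; simpl; intros; auto. apply IHp. constructor; auto. Qed.

Lemma red_apps p x y : red x y -> red (apps x p) (apps y p).
Proof. apply red_ctx, step_apps. Qed.

Definition Pole t s := exists w, inM t w /\ red s w.

Lemma pole_back t s s' : red s s' -> Pole t s' -> Pole t s.
Proof. intros H [w [H1 H2]]; exists w; split; auto; eapply red_trans; eauto. Qed.
Lemma pole_mu t s : Pole (mshift 0 t) s -> Pole t (Mu s).
Proof. intros [w [H1 H2]]; exists (Mu w); split; [constructor; auto|].
  apply (red_ctx Mu); auto. intros; constructor; auto. Qed.
Lemma pole_ctrl t a s : Pole t s -> Pole t (Ctrl a s).
Proof. intros [w [H1 H2]]; exists (Ctrl a w); split; [constructor; auto|].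
  apply (red_ctx (Ctrl a)); auto. intros; constructor; auto. Qed.
Lemma pole_base t : Pole t t.
Proof. exists t; split; [constructor|apply red_refl]. Qed.

Definition msh n t := Nat.iter n (mshift 0) t.
Definition mshe n e := Nat.iter n (mshift_e 0) e.
Definition mshs n p := map (mshe n) p.

Lemma msh_add m n x : msh m (msh n x) = msh (m + n) x.
Proof. unfold msh. symmetry. apply Nat.iter_add. Qed.
Lemma mshe_add m n x : mshe m (mshe n x) = mshe (m + n) x.
Proof. unfold mshe. symmetry. apply Nat.iter_add. Qed.
Lemma mshs_add m n p : mshs m (mshs n p) = mshs (m + n) p.
Proof. unfold mshs. rewrite map_map. apply map_ext. intros; apply mshe_add. Qed.
Lemma mshs0 p : mshs 0 p = p.
Proof. unfold mshs. apply map_id. Qed.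
Lemma mshs_cons n e p : mshs n (e :: p) = mshe n e :: mshs n p.
Proof. reflexivity. Qed.
Lemma mshs_nil n : mshs n nil = nil.
Proof. reflexivity. Qed.
Lemma mshe_ETm n v : mshe n (ETm v) = ETm (msh n v).
Proof. induction n; simpl; auto. unfold mshe in *; simpl; rewrite IHn; auto. Qed.
Lemma mshe_P1 n : mshe n Proj1 = Proj1.
Proof. induction n; simpl; auto. unfold mshe in *; simpl; rewrite IHn; auto. Qed.
Lemma mshe_P2 n : mshe n Proj2 = Proj2.
Proof. induction n; simpl; auto. unfold mshe in *; simpl; rewrite IHn; auto. Qed.
Lemma mshe_Case n u v : mshe n (Case u v) = Case (msh n u) (msh n v).
Proof. induction n; simpl; auto. unfold mshe in *; simpl; rewrite IHn; auto. Qed.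
Lemma msh_App n x e : msh n (App x e) = App (msh n x) (mshe n e).
Proof. induction n; simpl; auto. unfold mshe, msh in *; simpl; rewrite IHn; auto. Qed.
Lemma msh_apps n p : forall x, msh n (apps x p) = apps (msh n x) (mshs n p).
Proof. induction p; simpl; intros; auto. rewrite IHp, msh_App. auto. Qed.
Lemma msh_lshift n x : msh n (lshift 0 x) = lshift 0 (msh n x).
Proof. induction n; simpl; auto. unfold msh in *; simpl; rewrite IHn. symmetry; apply (proj1 B3). Qed.
Lemma mshe_lshift n x : mshe n (lshift_e 0 x) = lshift_e 0 (mshe n x).
Proof. induction n; simpl; auto. unfold mshe in *; simpl; rewrite IHn. symmetry; apply (proj2 B3). Qed.
Lemma mshs_lshift n p : mshs n (map (lshift_e 0) p) = map (lshift_e 0) (mshs n p).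
Proof. unfold mshs; rewrite !map_map; apply map_ext; intros; apply mshe_lshift. Qed.
Lemma msh_sub_n n : forall t xi s r, msh n (sub xi s r t) =
  sub (fun a => Nat.iter n S (xi a)) (fun i => msh n (s i)) (fun a => mshs n (r a)) t.
Proof.
  induction n; intros.
  - apply (proj1 sub_ext); intros; auto. symmetry; apply mshs0.
  - change (msh (S n) (sub xi s r t)) with (mshift 0 (msh n (sub xi s r t))).
    rewrite IHn, (proj1 msh_sub). apply (proj1 sub_ext); intros; auto.
    unfold mshs; rewrite map_map; apply map_ext; intros; reflexivity.
Qed.

Definition scons (v : term) (s : nat -> term) n := match n with 0 => v | S n => s n end.

Lemma beta_sub v xi s r u :
  lsubst 0 v (sub xi (upL s) (lshR r) u) = sub xi (scons v s) r u.
Proof.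
  rewrite (proj1 lsub_sub). apply (proj1 sub_ext); intros; auto.
  - destruct n; simpl; auto. apply (proj1 B4).
  - unfold lshR; rewrite map_map. rewrite <- (map_id (r a)) at 2. apply map_ext; intros; apply (proj2 B4).
Qed.

Lemma perm_red p : forall x u1 u2,
  red (apps (App x (Case u1 u2)) p)
      (App x (Case (apps u1 (map (lshift_e 0) p)) (apps u2 (map (lshift_e 0) p)))).
Proof.
  induction p; simpl; intros.
  - apply red_refl.
  - eapply red_trans; [apply red_apps, red_step, st_perm|]. apply IHp.
Qed.

Definition muR (q : list eterm) (r : nat -> list eterm) a :=
  match a with 0 => map (mshift_e 0) q | S a => map (mshift_e 0) (r a) end.

Lemma mu_red xi s r u p : forall q,
  red (apps (Mu (sub (upX xi) (fun n => mshift 0 (s n)) (muR q r) u)) p)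
      (Mu (sub (upX xi) (fun n => mshift 0 (s n)) (muR (q ++ p) r) u)).
Proof.
  induction p; simpl; intros.
  - rewrite app_nil_r; apply red_refl.
  - eapply red_trans; [apply red_apps, red_step, st_mu|].
    rewrite (proj1 ssub_sub).
    replace (q ++ a :: p) with ((q ++ a :: nil) ++ p) by (rewrite <- app_assoc; reflexivity).
    erewrite (proj1 sub_ext); [apply IHp| | |]; intros; auto.
    + simpl. apply (proj1 B7).
    + destruct a0; simpl.
      * rewrite map_app, map_map. simpl. f_equal. apply map_ext; intros; apply (proj2 B7).
      * rewrite map_map, app_nil_r. apply map_ext; intros; apply (proj2 B7).
Qed.

Definition realOf (S : term -> list eterm -> Prop) t s :=
  forall p, (forall n, S (msh n t) (mshs n p)) -> Pole t (apps s p).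

Fixpoint stk (A : form) : term -> list eterm -> Prop :=
  match A with
  | PVar _ => fun _ _ => True
  | Bot => fun _ p => p = nil
  | Imp A B => fun t p => exists v p', p = ETm v :: p' /\
       (forall n, realOf (stk A) (msh n t) (msh n v)) /\ stk B t p'
  | And A B => fun t p => exists p', (p = Proj1 :: p' /\ stk A t p') \/ (p = Proj2 :: p' /\ stk B t p')
  | Or A B => fun t p => exists u1 u2, p = Case u1 u2 :: nil /\
       (forall v, (forall n, realOf (stk A) (msh n t) (msh n v)) -> Pole t (lsubst 0 v u1)) /\
       (forall v, (forall n, realOf (stk B) (msh n t) (msh n v)) -> Pole t (lsubst 0 v u2))
  end.

Definition StR A t v := forall n, realOf (stk A) (msh n t) (msh n v).
Definition StS A t p := forall n, stk A (msh n t) (mshs n p).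

Lemma StR_shift A t v m : StR A t v -> StR A (msh m t) (msh m v).
Proof. intros H n. rewrite !msh_add. apply H. Qed.
Lemma StS_shift A t p m : StS A t p -> StS A (msh m t) (mshs m p).
Proof. intros H n. rewrite msh_add, mshs_add. apply H. Qed.

Lemma StR_real A t v : StR A t v -> realOf (stk A) t v.
Proof. intros H; apply (H 0). Qed.

Definition Hyp G D t s r :=
  (forall i B, nth_error G i = Some B -> StR B t (s i)) /\
  (forall a B, nth_error D a = Some B -> StS B t (r a)).

Lemma Hyp_shift G D t s r n : Hyp G D t s r ->
  Hyp G D (msh n t) (fun i => msh n (s i)) (fun a => mshs n (r a)).
Proof. intros [H1 H2]; split; intros; [apply StR_shift|apply StS_shift]; eauto. Qed.

Lemma stab G D A u : (forall t xi s r, Hyp G D t s r -> realOf (stk A) t (sub xi s r u)) ->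
  forall t xi s r, Hyp G D t s r -> StR A t (sub xi s r u).
Proof.
  intros H t xi s r Hh n. rewrite msh_sub_n. apply H. apply Hyp_shift; auto.
Qed.

Lemma StS_Imp A B t p : StS (Imp A B) t p ->
  exists v p', p = ETm v :: p' /\ StR A t v /\ StS B t p'.
Proof.
  intros H. destruct (H 0) as [v [p' [E [_ _]]]]. rewrite mshs0 in E. subst p.
  exists v, p'; split; auto. split; intros n; destruct (H n) as [v2 [p2 [E2 [H1 H2]]]];
  rewrite mshs_cons, mshe_ETm in E2; injection E2; intros; subst; auto.
  apply (H1 0).
Qed.

Lemma StS_And A B t p : StS (And A B) t p ->
  exists p', (p = Proj1 :: p' /\ StS A t p') \/ (p = Proj2 :: p' /\ StS B t p').
Proof.
  intros H. destruct (H 0) as [p' [[E _]|[E _]]]; rewrite mshs0 in E; subst p; exists p'.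
  - left; split; auto; intros n; destruct (H n) as [p2 [[E2 H2]|[E2 H2]]];
    rewrite mshs_cons, ?mshe_P1 in E2; injection E2; intros; subst; auto; discriminate.
  - right; split; auto; intros n; destruct (H n) as [p2 [[E2 H2]|[E2 H2]]];
    rewrite mshs_cons, ?mshe_P2 in E2; injection E2; intros; subst; auto; discriminate.
Qed.

Lemma msh_Var n i : msh n (Var i) = Var i.
Proof. induction n; simpl; auto. unfold msh in *; simpl; rewrite IHn; auto. Qed.

Lemma case_sub w n xi s r u :
  lsubst 0 w (msh n (sub xi (upL s) (lshR r) u)) =
  sub (fun a => Nat.iter n S (xi a)) (scons w (fun i => msh n (s i))) (fun a => mshs n (r a)) u.
Proof.
  rewrite msh_sub_n, (proj1 lsub_sub). apply (proj1 sub_ext); intros; auto.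
  - destruct n0; simpl.
    + rewrite msh_Var. reflexivity.
    + rewrite msh_lshift. apply (proj1 B4).
  - unfold lshR. rewrite mshs_lshift, map_map. rewrite <- (map_id (mshs n (r a))) at 2.
    apply map_ext; intros; apply (proj2 B4).
Qed.

Lemma Hyp_cons G D t s r A v : Hyp G D t s r -> StR A t v -> Hyp (A :: G) D t (scons v s) r.
Proof.
  intros [H1 H2] Hv; split; auto. intros [|i] B E; simpl in E.
  - injection E; intros; subst; auto.
  - apply H1; auto.
Qed.

Lemma apps_cons x e p : apps x (e :: p) = apps (App x e) p.
Proof. reflexivity. Qed.

Lemma adequacy G D u A : ty G D u A -> forall t xi s r, Hyp G D t s r ->
  realOf (stk A) t (sub xi s r u).
Proof.
  induction 1; intros tt xi s r Hh; simpl.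
  - apply StR_real. apply (proj1 Hh) with (i := n); auto.
  - intros p Hp. destruct (StS_Imp _ _ _ _ Hp) as [v [p' [E [Hv Hp']]]]. subst p.
    rewrite apps_cons. eapply pole_back; [apply red_apps, red_step, st_beta|].
    rewrite beta_sub. apply IHty; auto. apply Hyp_cons; auto.
  - intros p Hp. change (Pole tt (apps (sub xi s r u) (ETm (sub xi s r v) :: p))).
    apply IHty1; auto. intros n. exists (msh n (sub xi s r v)), (mshs n p). split; [rewrite mshs_cons, mshe_ETm; reflexivity|].
    split; [|apply Hp]. apply StR_shift. eapply stab; eauto.
  - intros p Hp. destruct (StS_And _ _ _ _ Hp) as [p' [[E Hp']|[E Hp']]]; subst p; rewrite apps_cons.
    + eapply pole_back; [apply red_apps, red_step, st_proj1|]. apply IHty1; auto.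
    + eapply pole_back; [apply red_apps, red_step, st_proj2|]. apply IHty2; auto.
  - intros p Hp. change (Pole tt (apps (sub xi s r t) (Proj1 :: p))).
    apply IHty; auto. intros n. exists (mshs n p). left. rewrite mshs_cons, mshe_P1. auto.
  - intros p Hp. change (Pole tt (apps (sub xi s r t) (Proj2 :: p))).
    apply IHty; auto. intros n. exists (mshs n p). right. rewrite mshs_cons, mshe_P2. auto.
  - intros p Hp. destruct (Hp 0) as [u1 [u2 [E [H1 H2]]]]. rewrite mshs0 in E; subst p.
    simpl. eapply pole_back; [apply red_step, st_case1|]. apply H1. eapply stab; eauto.
  - intros p Hp. destruct (Hp 0) as [u1 [u2 [E [H1 H2]]]]. rewrite mshs0 in E; subst p.
    simpl. eapply pole_back; [apply red_step, st_case2|]. apply H2. eapply stab; eauto.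
  - intros p Hp. eapply pole_back; [apply perm_red|].
    change (Pole tt (apps (sub xi s r t) (Case (apps (sub xi (upL s) (lshR r) u) (map (lshift_e 0) p))
       (apps (sub xi (upL s) (lshR r) v) (map (lshift_e 0) p)) :: nil))).
    apply IHty1; auto. intros n. do 2 eexists. split; [rewrite mshs_cons, mshe_Case; reflexivity|].
    split; intros w Hw; rewrite msh_apps, mshs_lshift, apps_lsubst, map_map;
      rewrite (map_ext _ (fun e => e)) by (intros; apply (proj2 B4)); rewrite map_id, case_sub.
    + apply IHty2. apply Hyp_cons; auto. apply Hyp_shift; auto. apply StS_shift; auto.
    + apply IHty3. apply Hyp_cons; auto. apply Hyp_shift; auto. apply StS_shift; auto.
  - intros p Hp. specialize (Hp 0). simpl in Hp. rewrite mshs0 in Hp. subst p. simpl.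
    apply pole_ctrl. apply IHty; auto. apply (proj2 Hh) with (a := a); auto.
  - intros p Hp.
    rewrite ((proj1 sub_ext) t (upX xi) (fun n => mshift 0 (s n)) (upM r) (upX xi) (fun n => mshift 0 (s n)) (muR nil r)); auto.
    eapply pole_back; [apply mu_red|]. simpl. apply pole_mu.
    change (Pole (msh 1 tt) (apps (sub (upX xi) (fun n => msh 1 (s n)) (muR p r) t) nil)).
    apply IHty.
    + split.
      * apply (proj1 (Hyp_shift _ _ _ _ _ 1 Hh)).
      * intros [|a] B E; simpl in E.
        -- injection E; intros; subst. apply (StS_shift _ _ _ 1 Hp).
        -- apply (proj2 (Hyp_shift _ _ _ _ _ 1 Hh)) with (a := a); auto.
    + intros n. reflexivity.
Qed.

Theorem mainTheorem6 (p : nat) (T : term)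
  (HT : ty nil nil T (Imp Bot (PVar p)))
  (t : term) (us : list eterm) :
  exists w, inM t w /\ red (apps (App T (ETm t)) us) w.
Proof.
  assert (H := adequacy _ _ _ _ HT t (fun a => a) Var (fun _ => nil)).
  rewrite (proj1 sub_id) in H; auto.
  assert (Hh : Hyp nil nil t Var (fun _ => nil)).
  { split; intros [|i] B E; discriminate. }
  specialize (H Hh (ETm t :: us)).
  apply H. intros n. exists (msh n t), (mshs n us). split.
  - rewrite mshs_cons, mshe_ETm; reflexivity.
  - split; [|exact I]. intros m q Hq. specialize (Hq 0). simpl in Hq. rewrite mshs0 in Hq. subst q.
    apply pole_base.
Qed.
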